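(* Let $1\le b<M$ and let $C$ be the array code over $\mathbb{F}_q$ whose columns are associated with all $b$-dimensional subspaces of $\mathbb{F}_q^M$, each exactly once. Then $C$ has node locality $r_{\mathrm n}=2$, and symbol locality $r_{\mathrm s}=1$ if $b>1$ and $r_{\mathrm s}=2$ if $b=1$.
   Context: $q$ is a prime power. A $[b\times n,M,d]$ array code over $\mathbb{F}_q$ is an $\mathbb{F}_q$-linear space of $b\times n$ matrices of dimension $M$. Given $b$-dimensional subspaces $V_1,\dots,V_n$ of $\mathbb{F}_q^M$, the array code whose columns are associated with them is obtained by placing a basis of $V_j$ as columns $(j-1)b+1,\dots,jb$ (the $j$th thick column) of an $M\times bn$ matrix $G$ and taking all arrays whose column-by-column flattening lies in the row space of $G$. A set $S\subseteq[n]\setminus\{j\}$ is a recovery set for codeword column $j$ if every entry $c_{i,j}$ ($i\in[b]$) is a fixed $\mathbb{F}_q$-linear combination (possibly different for each $i$) of the entries in the columns indexed by $S$, valid for all codewords; equivalently $V_j\subseteq\sum_{k\in S}V_k$. It is a recovery set for symbol $(i,j)$ if $c_{i,j}$ is such a fixed linear combination; equivalently the $i$th column of the $j$th thick column of $G$ lies in $\sum_{k\in S}V_k$. The node locality $r_{\mathrm n}$ (resp. symbol locality $r_{\mathrm s}$) is the smallest $r$ such that every codeword column (resp. every symbol) has a recovery set of size at most $r$. *)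

(* Defs.v *)
From HB Require Import structures.
From mathcomp Require Import all_boot all_order all_algebra all_field.
Set Implicit Arguments. Unset Strict Implicit. Unset Printing Implicit Defensive.
Import GRing.Theory.
Local Open Scope ring_scope.

(* An array code of length n over F with b rows and dimension M is given by a
   family G : 'I_n -> 'M[F]_(b, M): the rows of G j are the b generator-matrix
   columns of the j-th thick column (mathcomp uses row vectors, so the M x bn
   generator matrix of the paper is stored transposed, thick column by thick
   column). *)

Definition codeword (F : fieldType) (b M n : nat) (G : 'I_n -> 'M[F]_(b, M))
    (x : 'rV[F]_M) : 'M[F]_(b, n) :=
  \matrix_(i < b, j < n) (x *m (G j)^T) 0 i.

Definition symbol_recovery_set (F : fieldType) (b M n : nat)
    (G : 'I_n -> 'M[F]_(b, M)) (S : {set 'I_n}) (i : 'I_b) (j : 'I_n) : Prop :=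
  j \notin S /\
  exists a : 'I_n -> 'I_b -> F,
    forall x : 'rV[F]_M,
      codeword G x i j = \sum_(k in S) \sum_(i' < b) a k i' * codeword G x i' k.

Definition node_recovery_set (F : fieldType) (b M n : nat)
    (G : 'I_n -> 'M[F]_(b, M)) (S : {set 'I_n}) (j : 'I_n) : Prop :=
  forall i : 'I_b, symbol_recovery_set G S i j.

Definition node_local_within (F : fieldType) (b M n : nat)
    (G : 'I_n -> 'M[F]_(b, M)) (r : nat) : Prop :=
  forall j : 'I_n, exists S : {set 'I_n}, node_recovery_set G S j /\ (#|S| <= r)%N.

Definition symbol_local_within (F : fieldType) (b M n : nat)
    (G : 'I_n -> 'M[F]_(b, M)) (r : nat) : Prop :=
  forall (i : 'I_b) (j : 'I_n),
    exists S : {set 'I_n}, symbol_recovery_set G S i j /\ (#|S| <= r)%N.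

Definition is_node_locality (F : fieldType) (b M n : nat)
    (G : 'I_n -> 'M[F]_(b, M)) (r : nat) : Prop :=
  node_local_within G r /\ forall r', node_local_within G r' -> (r <= r')%N.

Definition is_symbol_locality (F : fieldType) (b M n : nat)
    (G : 'I_n -> 'M[F]_(b, M)) (r : nat) : Prop :=
  symbol_local_within G r /\ forall r', symbol_local_within G r' -> (r <= r')%N.

Definition all_subspaces_code (F : fieldType) (b M n : nat)
    (G : 'I_n -> 'M[F]_(b, M)) : Prop :=
  [/\ forall j, row_free (G j),
      forall j k, (G j == G k)%MS -> j = k
    & forall A : 'M[F]_(b, M), row_free A -> exists j, (G j == A)%MS].

(* Main.v *)
Require Import Defs.
From HB Require Import structures.
From mathcomp Require Import all_boot all_order all_algebra all_field.
From mathcomp Require Import zify.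

Module Helpers.
Set Implicit Arguments. Unset Strict Implicit. Unset Printing Implicit Defensive.
Import GRing.Theory.
Local Open Scope ring_scope.

Lemma codewordE (F : fieldType) (b M n : nat) (G : 'I_n -> 'M[F]_(b, M)) x i j :
  codeword G x i j = \sum_m x 0 m * G j i m.
Proof. rewrite /codeword !mxE; apply: eq_bigr => m _; by rewrite mxE. Qed.

Lemma codeword_delta (F : fieldType) (b M n : nat) (G : 'I_n -> 'M[F]_(b, M)) m i j :
  codeword G (delta_mx 0 m) i j = G j i m.
Proof.
rewrite codewordE (bigD1 m) //= mxE !eqxx mul1r big1 ?addr0 // => m' ne.
by rewrite mxE eqxx (negbTE ne) mul0r.
Qed.

Lemma symrecP (F : fieldType) (b M n : nat) (G : 'I_n -> 'M[F]_(b, M)) S i j :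
  symbol_recovery_set G S i j <-> (j \notin S /\ (row i (G j) <= \sum_(k in S) <<G k>>)%MS).
Proof.
split => [[jS [a Ha]] | [jS sub]]; split => //.
  have -> : row i (G j) = \sum_(k in S) (\row_i' a k i') *m G k.
    apply/rowP => m.
    rewrite mxE; have := Ha (delta_mx 0 m); rewrite codeword_delta => ->.
    rewrite summxE; apply: eq_bigr => k _; rewrite !mxE.
    apply: eq_bigr => i' _; by rewrite codeword_delta mxE.
  apply: summx_sub => k kS; apply: (sumsmx_sup k) => //.
  by rewrite genmxE submxMl.
case/sub_sumsmxP: sub => u Hu.
pose D k := u k *m <<G k>>%MS *m pinvmx (G k).
have HD k : u k *m <<G k>>%MS = D k *m G k.
  by rewrite /D mulmxKpV // -(genmxE (G k)) submxMl.
exists (fun k i' => D k 0 i') => x.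
have H m : G j i m = \sum_(k in S) \sum_i' D k 0 i' * G k i' m.
  move/rowP/(_ m): Hu; rewrite mxE summxE => ->; apply: eq_bigr => k _; by rewrite HD mxE.
rewrite codewordE.
under eq_bigr => m _ do rewrite H mulr_sumr.
rewrite exchange_big; apply: eq_bigr => k _.
under eq_bigr => m _ do rewrite mulr_sumr.
rewrite exchange_big; apply: eq_bigr => i' _.
rewrite codewordE mulr_sumr; apply: eq_bigr => m _; by rewrite mulrCA.
Qed.
Definition rep (F : fieldType) (b M : nat) (V : 'M[F]_(b, M)) (m : 'I_b) (v : 'rV[F]_M) :
  'M[F]_(b, M) := \matrix_(r, c) (if r == m then v 0 c else V r c).

Lemma row_rep (F : fieldType) (b M : nat) (V : 'M[F]_(b, M)) m v r :
  row r (rep V m v) = if r == m then v else row r V.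
Proof. apply/rowP => c; rewrite !mxE; by case: (r == m); rewrite ?mxE. Qed.

Lemma exists_out (F : fieldType) (b M : nat) (V : 'M[F]_(b, M)) :
  (b < M)%N -> exists w : 'rV[F]_M, ~~ (w <= V)%MS.
Proof.
move=> bM; have : ~~ ((1%:M : 'M[F]_M) <= V)%MS.
  apply/negP => /mxrankS; rewrite mxrank1 => H.
  have := rank_leq_row V; lia.
case/row_subPn => i Hi; by exists (row i 1%:M).
Qed.

Lemma rep_free (F : fieldType) (b M : nat) (V : 'M[F]_(b, M)) m v (w : 'rV[F]_M) :
  row_free V -> ~~ (w <= V)%MS -> (w <= rep V m v + row m V)%MS ->
  row_free (rep V m v).
Proof.
move=> fV wV wU.
have lt1 : (\rank V < \rank (V + w))%N.
  have : (V < V + w)%MS.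
    rewrite ltmxE addsmxSl /=; apply/negP => H; move/negP: wV; apply.
    by apply: submx_trans H; apply: addsmxSr.
  by rewrite ltmxErank => /andP[].
have le2 : (V + w <= rep V m v + row m V)%MS.
  rewrite addsmx_sub wU andbT; apply/row_subP => r.
  case: (eqVneq r m) => [->|ne]; first exact: addsmxSr.
  apply: submx_trans (addsmxSl _ _).
  by apply: (eq_row_sub r); rewrite row_rep (negbTE ne).
have le3 := (mxrank_adds_leqif (rep V m v) (row m V)).1.
have le4 := rank_leq_row (row m V).
have le5 := rank_leq_row (rep V m v).
have le6 := mxrankS le2.
move: fV; rewrite /row_free => /eqP fV.
apply/eqP; lia.
Qed.

Lemma getk (F : fieldType) (b M n : nat) (G : 'I_n -> 'M[F]_(b, M)) j m v (w : 'rV[F]_M) :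
  all_subspaces_code G -> ~~ (w <= G j)%MS -> (w <= rep (G j) m v + row m (G j))%MS ->
  exists k, [/\ k != j, (v <= G k)%MS & forall r, r != m -> (row r (G j) <= G k)%MS].
Proof.
move=> [fr inj sur] wV wU.
have [k Hk] := sur _ (rep_free (fr j) wV wU).
case/andP: Hk => Hk1 Hk2.
exists k; split.
- apply/negP => /eqP kj; subst k; move/negP: wV; apply.
  apply: submx_trans wU _; rewrite addsmx_sub Hk2 /=.
  exact: row_sub.
- apply: submx_trans Hk2; apply: (eq_row_sub m); by rewrite row_rep eqxx.
- move=> r ne; apply: submx_trans Hk2; apply: (eq_row_sub r); by rewrite row_rep (negbTE ne).
Qed.

Lemma lb0 (F : fieldType) (b M n : nat) (G : 'I_n -> 'M[F]_(b, M)) i j :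
  row_free (G j) -> symbol_recovery_set G set0 i j -> False.
Proof.
move=> fr /symrecP [_]; rewrite big_set0 => /submx0null.
rewrite rowE -(mul0mx _ (G j)) => /(row_free_inj fr) /matrixP /(_ 0 i).
by rewrite !mxE !eqxx /= => /eqP; rewrite oner_eq0.
Qed.

Lemma lb1 (F : fieldType) (b M n : nat) (G : 'I_n -> 'M[F]_(b, M)) j k :
  all_subspaces_code G -> (forall r, row r (G j) <= G k)%MS -> k != j -> False.
Proof.
move=> [fr inj _] H kj.
have sub : (G j <= G k)%MS by apply/row_subP.
have := mxrank_leqif_eq sub.
move: (fr j) (fr k); rewrite /row_free => /eqP -> /eqP -> [_].
rewrite eqxx => /esym /inj jk; by rewrite jk eqxx in kj.
Qed.

Lemma node_up (F : fieldType) (b M n : nat) (G : 'I_n -> 'M[F]_(b, M)) :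
  (1 <= b)%N -> (b < M)%N -> all_subspaces_code G -> node_local_within G 2.
Proof.
move=> b1 bM code j.
have [w wV] := exists_out (G j) bM.
pose m : 'I_b := Ordinal b1.
have h1 : (w <= rep (G j) m w + row m (G j))%MS.
  apply: submx_trans (addsmxSl _ _); apply: (eq_row_sub m); by rewrite row_rep eqxx.
have h2 : (w <= rep (G j) m (row m (G j) + w) + row m (G j))%MS.
  have e : w = (row m (G j) + w) - row m (G j) by rewrite addrC addKr.
  rewrite [X in (X <= _)%MS]e.
  apply: addmx_sub; last by rewrite eqmx_opp addsmxSr.
  apply: submx_trans (addsmxSl _ _); apply: (eq_row_sub m); by rewrite row_rep eqxx.
have [k1 [k1j v1 r1]] := getk code wV h1.
have [k2 [k2j v2 r2]] := getk code wV h2.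
exists [set k1; k2]; split; last by rewrite cards2; case: (k1 != k2).
move=> i; apply/symrecP; split.
  by rewrite !inE negb_or eq_sym k1j eq_sym k2j.
have s1 : (G k1 <= \sum_(k in [set k1; k2]) <<G k>>)%MS.
  by apply: (sumsmx_sup k1); rewrite ?inE ?eqxx ?genmxE.
have s2 : (G k2 <= \sum_(k in [set k1; k2]) <<G k>>)%MS.
  by apply: (sumsmx_sup k2); rewrite ?inE ?eqxx ?orbT ?genmxE.
case: (eqVneq i m) => [->|ne]; last exact: submx_trans (r1 _ ne) s1.
have e : row m (G j) = (row m (G j) + w) - w by rewrite addrK.
rewrite [X in (X <= _)%MS]e.
apply: addmx_sub; first exact: submx_trans v2 s2.
by rewrite eqmx_opp; exact: submx_trans v1 s1.
Qed.

Lemma sym_up (F : fieldType) (b M n : nat) (G : 'I_n -> 'M[F]_(b, M)) :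
  (1 < b)%N -> (b < M)%N -> all_subspaces_code G -> symbol_local_within G 1.
Proof.
move=> b1 bM code i j.
have [w wV] := exists_out (G j) bM.
have b0 : (0 < b)%N by apply: ltn_trans b1.
pose m : 'I_b := if val i == 0%N then Ordinal b1 else Ordinal b0.
have im : i != m.
  rewrite /m; case: ifP => /eqP /= H; apply/eqP => /(congr1 val) /=; lia.
have h1 : (w <= rep (G j) m w + row m (G j))%MS.
  apply: submx_trans (addsmxSl _ _); apply: (eq_row_sub m); by rewrite row_rep eqxx.
have [k1 [k1j v1 r1]] := getk code wV h1.
exists [set k1]; split; last by rewrite cards1.
apply/symrecP; split; first by rewrite inE eq_sym k1j.
by rewrite big_set1 genmxE; apply: r1.
Qed.

End Helpers.
Import Helpers.

Theorem mainTheorem4 (F : finFieldType) (b M n : nat) (G : 'I_n -> 'M[F]_(b, M)) :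
  (1 <= b)%N -> (b < M)%N -> all_subspaces_code G ->
  is_node_locality G 2 /\ is_symbol_locality G (if (1 < b)%N then 1 else 2).
Proof.
move=> b1 bM code.
have [fr inj sur] := code.
have [j0 _] : exists j, (G j == (pid_mx b : 'M[F]_(b, M)))%MS by apply: sur; rewrite /row_free rank_pid_mx // ltnW.
pose i0 : 'I_b := Ordinal b1.
have noS0 : forall i j, ~ symbol_recovery_set G set0 i j := fun i j => lb0 (fr j).
have card_le1 : forall S : {set 'I_n}, (#|S| <= 1)%N -> S = set0 \/ exists k, S = [set k].
  move=> S; rewrite leq_eqVlt ltnS leqn0 => /orP [/cards1P [k ->]| /eqP/cards0_eq ->].
    by right; exists k.
  by left.
split.
  split; first exact: node_up.
  move=> r' /(_ j0) [S [HS HSr]]; rewrite leqNgt; apply/negP => lt.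
  have [S0|[k Sk]] := card_le1 S (ltac:(lia)).
    subst S; exact: noS0 i0 j0 (HS i0).
  subst S; apply: (lb1 (j:=j0) (k:=k) code).
    move=> r; have /symrecP [_] := HS r; by rewrite big_set1 genmxE.
  have /symrecP [jS _] := HS i0; by move: jS; rewrite inE eq_sym.
case: ifP => b2.
  split; first exact: sym_up.
  move=> r' /(_ i0 j0) [S [HS HSr]]; rewrite lt0n; apply/eqP => r0; subst r'.
  move: HSr; rewrite leqn0 => /eqP /cards0_eq S0; subst S; exact: noS0 _ _ HS.
split.
  move=> i j; have [S [HS HSr]] := node_up b1 bM code j; exists S; split => //; exact: HS i.
move=> r' /(_ i0 j0) [S [HS HSr]]; rewrite leqNgt; apply/negP => lt.
have [S0|[k Sk]] := card_le1 S (ltac:(lia)).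
  subst S; exact: noS0 _ _ HS.
subst S; apply: (lb1 (j:=j0) (k:=k) code).
  move=> r; have -> : r = i0 by apply: val_inj => /=; move: (ltn_ord r) b2; lia.
  have /symrecP [_] := HS; by rewrite big_set1 genmxE.
have /symrecP [jS _] := HS; by move: jS; rewrite inE eq_sym.
Qed.
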